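(* Let $C\subset\mathbb{R}^d$ be a nonempty closed convex set, let $f(x)=\mathbb{E}_\xi[f(x,\xi)]$ where each $f(\cdot,\xi)$ is convex and $G$-Lipschitz, and let $x_*\in\arg\min_{x\in C}f(x)$. Let $\xi_0,\xi_1,\dots$ be i.i.d. samples, $c_k\in(0,1]$ and $\eta_k>0$ for $k\ge0$. Consider the projected SGDM iterates: $x_0\in C$, $z_0=x_0$, $z_{k+1}=\Pi_C(z_k-\eta_k\nabla f(x_k,\xi_k))$ for $k\ge 0$ and $x_k=(1-c_k)x_{k-1}+c_kz_k$ for $k\ge1$. Define, for $k\ge1$, $$A_k=\|z_k-x_*\|^2+\frac{2}{c_{k-1}}\eta_{k-1}\left[f(x_{k-1})-f(x_* )\right].$$ Suppose that $\left(\frac{1}{c_k}-1\right)\eta_k\le\frac{1}{c_{k-1}}\eta_{k-1}$ for all $k\ge2$ and $\left(\frac{1}{c_1}-1\right)\eta_1\le 0$. Then for every $k\ge1$, $$\mathbb{E}_{\xi_k}\left[A_{k+1}\right]\le A_k+\eta_k^2G^2,$$ where $\mathbb{E}_{\xi_k}$ denotes expectation with respect to $\xi_k$ conditional on $\xi_0,\dots,\xi_{k-1}$.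
   Context: $\Pi_C$ is the Euclidean projection onto $C$; $\nabla f(x,\xi)$ is a subgradient of $f(\cdot,\xi)$ at $x$. *)

(* Defs.v *)
From mathcomp Require Import all_boot all_order all_algebra.
From mathcomp Require Import all_classical all_reals all_analysis.
Set Implicit Arguments. Unset Strict Implicit. Unset Printing Implicit Defensive.
Import Order.TTheory GRing.Theory Num.Theory.
Import numFieldNormedType.Exports.
Local Open Scope classical_set_scope.
Local Open Scope ring_scope.

Section Defs.
Variables (R : realType) (d : nat).
Notation V := 'rV[R]_d.

Definition dotv (u v : V) : R := \sum_(i < d) u ord0 i * v ord0 i.
Definition enorm (u : V) : R := Num.sqrt (dotv u u).

Definition convex_fn (h : V -> R) : Prop :=
  forall x y t, 0 <= t <= 1 -> h (t *: x + (1 - t) *: y) <= t * h x + (1 - t) * h y.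

Definition is_proj (C : set V) (p : V -> V) : Prop :=
  forall y, C (p y) /\ (forall c, C c -> enorm (y - p y) <= enorm (y - c)).

Definition upd (T : Type) (s : nat -> T) (k : nat) (w : T) : nat -> T :=
  fun n => if n == k then w else s n.

Fixpoint sgdm (T : Type) (proj : V -> V) (g : V -> T -> V) (c eta : nat -> R)
    (x0 : V) (s : nat -> T) (k : nat) : V * V :=
  match k with
  | 0 => (x0, x0)
  | k'.+1 =>
      let zx := sgdm proj g c eta x0 s k' in
      let z' := proj (zx.1 - eta k' *: g zx.2 (s k')) in
      (z', (1 - c k) *: zx.2 + c k *: z')
  end.

Definition expect (dT : measure_display) (T : measurableType dT)
    (P : probability T R) (h : T -> R) : R :=
  fine (\int[P]_w (h w)%:E).

(* the potential A_k (for k >= 1) *)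
Definition Apot (T : Type) (proj : V -> V) (g : V -> T -> V) (c eta : nat -> R)
    (x0 : V) (F : V -> R) (xstar : V) (s : nat -> T) (k : nat) : R :=
  let z := (sgdm proj g c eta x0 s k).1 in
  let x := (sgdm proj g c eta x0 s k.-1).2 in
  enorm (z - xstar) ^+ 2 + 2 / c k.-1 * eta k.-1 * (F x - F xstar).

End Defs.

(* Main.v *)
Require Import Defs.
From mathcomp Require Import all_boot all_order all_algebra.
From mathcomp Require Import all_classical all_reals all_analysis.
From mathcomp Require Import ring lra.
Set Implicit Arguments. Unset Strict Implicit.
Import Order.TTheory GRing.Theory Num.Theory.
Import numFieldNormedType.Exports.
Local Open Scope classical_set_scope.
Local Open Scope ring_scope.

Section Geo.
Variables (R : realType) (d : nat).
Notation V := 'rV[R]_d.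
Implicit Types u v : V.

Lemma convC_mem (C : set V) : convex_set C -> forall a b t, 0 <= t -> t <= 1 ->
  C a -> C b -> C (t *: a + (1 - t) *: b).
Proof.
move=> cC a b t t0 t1 Ca Cb.
have := cC a b (Itv01 t0 t1); rewrite !inE => /(_ Ca Cb).
done.
Qed.

Lemma dotvDl u v (w : V) : dotv (u + v) w = dotv u w + dotv v w.
Proof. by rewrite /dotv -big_split; apply: eq_bigr => i _; rewrite !mxE mulrDl. Qed.
Lemma dotvC u v : dotv u v = dotv v u.
Proof. by rewrite /dotv; apply: eq_bigr => i _; rewrite mulrC. Qed.
Lemma dotvZl a u v : dotv (a *: u) v = a * dotv u v.
Proof. by rewrite /dotv mulr_sumr; apply: eq_bigr => i _; rewrite !mxE mulrA. Qed.
Lemma dotvNl u v : dotv (- u) v = - dotv u v.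
Proof. by rewrite -scaleN1r dotvZl mulN1r. Qed.
Lemma dotvDr u v (w : V) : dotv w (u + v) = dotv w u + dotv w v.
Proof. by rewrite dotvC dotvDl !(dotvC w). Qed.
Lemma dotvZr a u v : dotv v (a *: u) = a * dotv v u.
Proof. by rewrite dotvC dotvZl dotvC. Qed.
Lemma dotvNr u v : dotv v (- u) = - dotv v u.
Proof. by rewrite dotvC dotvNl dotvC. Qed.
Lemma dotvBl u v (w : V) : dotv (u - v) w = dotv u w - dotv v w.
Proof. by rewrite dotvDl dotvNl. Qed.
Lemma dotvBr u v (w : V) : dotv w (u - v) = dotv w u - dotv w v.
Proof. by rewrite dotvDr dotvNr. Qed.
Lemma dotv_ge0 u : 0 <= dotv u u.
Proof. by rewrite /dotv; apply: sumr_ge0 => i _; rewrite -expr2 sqr_ge0. Qed.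
Lemma enorm2 u : enorm u ^+ 2 = dotv u u.
Proof. by rewrite /enorm sqr_sqrtr // dotv_ge0. Qed.
Lemma enorm_ge0 u : 0 <= enorm u.
Proof. exact: sqrtr_ge0. Qed.
Lemma enorm_sub0 u : enorm (u - u) = 0.
Proof. by rewrite subrr /enorm /dotv big1 ?sqrtr0 // => i _; rewrite mxE mul0r. Qed.

Lemma dotv_sq u v : dotv (u + v) (u + v) = dotv u u + 2 * dotv u v + dotv v v.
Proof. by rewrite dotvDl !dotvDr (dotvC v u); ring. Qed.

Lemma enorm_le2 u v : enorm u <= enorm v -> dotv u u <= dotv v v.
Proof. by move=> h; rewrite -!enorm2 ler_pXn2r // nnegrE enorm_ge0. Qed.

Lemma proj_nonexp (C : set V) p : convex_set C -> is_proj C p ->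
  forall y c, C c -> dotv (p y - c) (p y - c) <= dotv (y - c) (y - c).
Proof.
move=> cC hp y c Cc.
have [Cq Hq] := hp y; set q := p y in Cq Hq *.
set a := dotv (y - q) (c - q).
set b := dotv (c - q) (c - q).
have b0 : 0 <= b by exact: dotv_ge0.
have a0 : a <= 0.
  rewrite leNgt; apply/negP => a0.
  set t := a / (a + b).
  have ab0 : 0 < a + b by lra.
  have tab : t * (a + b) = a by rewrite /t mulfVK // gt_eqF.
  have t0 : 0 < t by rewrite /t divr_gt0.
  have t1 : t <= 1 by rewrite /t ler_pdivrMr // mul1r; lra.
  have Cm := @convC_mem C cC _ _ _ (ltW t0) t1 Cc Cq.
  have := enorm_le2 (Hq _ Cm).
  have -> : y - (t *: c + (1 - t) *: q) = (y - q) + (- t) *: (c - q).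
    by apply/rowP => i; rewrite !mxE; ring.
  rewrite (dotv_sq (y - q)) !dotvZr !dotvZl -/a -/b.
  move=> h.
  have h2 : 2 * t * a <= t * t * b by nra.
  have h3 : 2 * a <= t * b by nra.
  nra.
have -> : y - c = (y - q) + (q - c) by rewrite addrA subrK.
rewrite (dotv_sq (y - q)).
have -> : dotv (y - q) (q - c) = - a by rewrite /a -dotvNr opprB.
have := dotv_ge0 (y - q); lra.
Qed.

Lemma subgrad_bound (T : Type) (f : V -> T -> R) (g : V -> T -> V) (G : R) :
  (forall w x y, `|f x w - f y w| <= G * enorm (x - y)) ->
  (forall x w y, f x w + dotv (g x w) (y - x) <= f y w) ->
  forall x w, dotv (g x w) (g x w) <= G ^+ 2.
Proof.
move=> hL hs x w.
have h1 := hs x w (x + g x w).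
have h2 := hL w (x + g x w) x.
rewrite (addrC x) addrK in h1 h2.
have n0 := enorm_ge0 (g x w).
have e2 := enorm2 (g x w).
have h3 : f (g x w + x) w - f x w <= `|f (g x w + x) w - f x w| by exact: ler_norm.
set n := enorm (g x w) in n0 e2 h2.
rewrite -e2.
have : n ^+ 2 <= G * n by lra.
nra.
Qed.

Lemma sgdm_upd (T : Type) proj (g : V -> T -> V) c eta x0 s k w j :
  (j <= k)%N -> sgdm proj g c eta x0 (upd s k w) j = sgdm proj g c eta x0 s j.
Proof.
elim: j => [//|j IH] hj /=.
by rewrite IH ?(ltnW hj) // /upd (ltn_eqF hj).
Qed.

Lemma sgdm_C (T : Type) (C : set V) proj (g : V -> T -> V) c eta x0 s :
  convex_set C -> is_proj C proj -> C x0 -> (forall k, 0 < c k <= 1) ->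
  forall k, C (sgdm proj g c eta x0 s k).1 /\ C (sgdm proj g c eta x0 s k).2.
Proof.
move=> cC hp Cx0 hc; elim=> [|k [IH1 IH2]] //=.
set z' := proj _.
have Cz : C z' by case: (hp ((sgdm proj g c eta x0 s k).1 -
                               eta k *: g (sgdm proj g c eta x0 s k).2 (s k))).
split => //.
have /andP[c0 c1] := hc k.+1.
have t0 : 0 <= 1 - c k.+1 by lra.
have t1 : 1 - c k.+1 <= 1 by lra.
have := @convC_mem C cC _ _ _ t0 t1 IH2 Cz.
by rewrite (_ : 1 - (1 - c k.+1) = c k.+1) //; ring.
Qed.

End Geo.
Arguments sgdm_C {R d T C proj g c eta x0 s}.
Arguments proj_nonexp {R d C p}.
Arguments subgrad_bound {R d T f g G}.

Lemma le_integral_nm (R : realType) (dT : measure_display) (T : measurableType dT)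
  (mu : {measure set T -> \bar R}) (f1 f2 : T -> \bar R) :
  (forall x, (0 <= f1 x)%E) -> (forall x, (f1 x <= f2 x)%E) ->
  (\int[mu]_x f1 x <= \int[mu]_x f2 x)%E.
Proof.
move=> f10 f12.
rewrite !ge0_integralE//; last by move=> x _; exact: le_trans (f10 x) (f12 x).
apply: ereal_sup_le => _ [h Hh <-]; exists h => //= x.
apply: le_trans (Hh x) _.
rewrite /patch; case: ifP => // _.
Qed.
Lemma expectE (R : realType) (dT : measure_display) (T : measurableType dT)
  (P : probability T R) (h : T -> R) :
  P.-integrable setT (fun w => (h w)%:E) ->
  (\int[P]_w (h w)%:E)%E = (expect P h)%:E.
Proof. by move=> ih; rewrite /expect fineK // integrable_fin_num. Qed.

Lemma int_lin (R : realType) (dT : measure_display) (T : measurableType dT)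
  (P : probability T R) (h1 h2 h3 : T -> R) (K a b c : R) :
  P.-integrable setT (fun w => (h1 w)%:E) ->
  P.-integrable setT (fun w => (h2 w)%:E) ->
  P.-integrable setT (fun w => (h3 w)%:E) ->
  (\int[P]_w (K + a * h1 w + b * h2 w + c * h3 w)%:E)%E =
  (K + a * expect P h1 + b * expect P h2 + c * expect P h3)%:E.
Proof.
move=> i1 i2 i3.
have iK : P.-integrable setT (fun _ => K%:E) by exact: finite_measure_integrable_cst.
have iZ1 := integrableZl measurableT a i1.
have iZ2 := integrableZl measurableT b i2.
have iZ3 := integrableZl measurableT c i3.
under eq_integral do rewrite !EFinD !EFinM.
rewrite integralD //; last first.
  by apply: integrableD => //; apply: integrableD.
rewrite integralD //; last by apply: integrableD.
rewrite integralD //.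
rewrite !integralZl // integral_cst //.
idtac.
have P1 : (P : {measure set T -> \bar R}) [set: T] = 1%E by exact: probability_setT.
rewrite P1 mule1 !expectE //.
Qed.
Theorem corollary16 (R : realType) (d : nat) (dT : measure_display)
  (T : measurableType dT) (P : probability T R)
  (C : set 'rV[R]_d) (proj : 'rV[R]_d -> 'rV[R]_d)
  (f : 'rV[R]_d -> T -> R) (g : 'rV[R]_d -> T -> 'rV[R]_d) (G : R)
  (xstar x0 : 'rV[R]_d) (c eta : nat -> R) :
  C !=set0 -> closed C -> convex_set C -> is_proj C proj ->
  (forall w, convex_fn (fun x => f x w)) ->
  (forall w x y, `|f x w - f y w| <= G * enorm (x - y)) ->
  (forall x, P.-integrable setT (fun w => (f x w)%:E)) ->
  (forall x w y, f x w + dotv (g x w) (y - x) <= f y w) ->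
  (forall x i, measurable_fun setT (fun w => g x w ord0 i)) ->
  C xstar ->
  (forall x, C x -> expect P (f xstar) <= expect P (f x)) ->
  C x0 ->
  (forall k, 0 < c k <= 1) -> (forall k, 0 < eta k) ->
  (forall k, (2 <= k)%N -> ((c k)^-1 - 1) * eta k <= (c k.-1)^-1 * eta k.-1) ->
  ((c 1%N)^-1 - 1) * eta 1%N <= 0 ->
  forall (s : nat -> T) (k : nat), (1 <= k)%N ->
    (\int[P]_w (Apot proj g c eta x0 (fun x => expect P (f x)) xstar
                   (upd s k w) k.+1)%:E
     <= (Apot proj g c eta x0 (fun x => expect P (f x)) xstar s k
         + eta k ^+ 2 * G ^+ 2)%:E)%E.
Proof.
move=> Cne clC cC hp fconv flip fint fsub gmeas Cxs xsmin Cx0 hc heta hstep hone s k hk.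
set F := fun x => expect P (f x).
set z := (sgdm proj g c eta x0 s k).1.
set x := (sgdm proj g c eta x0 s k).2.
set xp := (sgdm proj g c eta x0 s k.-1).2.
have Hx : x = (1 - c k) *: xp + c k *: z.
  by rewrite /x /xp /z; case: (k) hk => [//|k'] _ /=.
have [Cz Cx] := sgdm_C (g:=g) (eta:=eta) (s:=s) cC hp Cx0 hc k.
have [_ Cxp] := sgdm_C (g:=g) (eta:=eta) (s:=s) cC hp Cx0 hc k.-1.
have Fx : F xstar <= F x by exact: xsmin.
have Fxp : F xstar <= F xp by exact: xsmin.
have /andP[ck0 ck1] := hc k.
have ek := heta k.
have Astep : forall w, Apot proj g c eta x0 F xstar (upd s k w) k.+1 =
   enorm (proj (z - eta k *: g x w) - xstar) ^+ 2 + 2 / c k * eta k * (F x - F xstar).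
  move=> w; rewrite /Apot -pred_Sn /= !sgdm_upd // /upd eqxx.
  done.
under eq_integral do rewrite Astep.
have -> : Apot proj g c eta x0 F xstar s k =
    enorm (z - xstar) ^+ 2 + 2 / c k.-1 * eta k.-1 * (F xp - F xstar) by [].
set ci := (c k)^-1.
have cci : c k * ci = 1 by rewrite /ci mulfV // gt_eqF.
set K0 := enorm (z - xstar) ^+ 2 + eta k ^+ 2 * G ^+ 2 + 2 / c k * eta k * (F x - F xstar).
pose r w := K0 + (- 2 * eta k * ci) * f x w + (2 * eta k) * f xstar w
            + (2 * eta k * (ci - 1)) * f xp w.
apply: le_trans (@le_integral_nm _ _ _ P _ (fun w => (r w)%:E) _ _) _.
- move=> w; rewrite lee_fin; apply: addr_ge0; first exact: sqr_ge0.
  apply: mulr_ge0; last by rewrite subr_ge0.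
  by apply: mulr_ge0 => //; [apply: divr_ge0 => //; exact: ltW | exact: ltW].
- move=> w; rewrite lee_fin.
  set gw := g x w.
  have hproj := proj_nonexp cC hp (z - eta k *: gw) xstar Cxs.
  have E1 : z - eta k *: gw - xstar = (z - xstar) + (- eta k) *: gw.
    by apply/rowP => i; rewrite !mxE; ring.
  rewrite E1 (dotv_sq (z - xstar)) !dotvZr !dotvZl in hproj.
  have hg : dotv gw gw <= G ^+ 2 := subgrad_bound flip fsub x w.
  have hv : z - xstar = (x - xstar) + (ci - 1) *: (x - xp).
    rewrite Hx; apply/rowP => i; rewrite !mxE /ci; field.
    by rewrite gt_eqF.
  have hd : dotv (z - xstar) gw = dotv gw (x - xstar) + (ci - 1) * dotv gw (x - xp).
    by rewrite dotvC hv dotvDr dotvZr.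
  have s1 := fsub x w xstar; have s2 := fsub x w xp.
  rewrite -(opprB x xstar) dotvNr in s1; rewrite -(opprB x xp) dotvNr in s2.
  have ci1 : 0 <= ci - 1 by nra.
  have p0 : (ci - 1) * (f x w - f xp w) <= (ci - 1) * dotv gw (x - xp).
    by apply: ler_wpM2l => //; lra.
  have p1 : eta k * (f x w - f xstar w + (ci - 1) * (f x w - f xp w)) <=
            eta k * dotv (z - xstar) gw.
    by apply: ler_wpM2l; [exact: ltW | rewrite hd; lra].
  have p2 : eta k ^+ 2 * dotv gw gw <= eta k ^+ 2 * G ^+ 2.
    by apply: ler_wpM2l => //; exact: sqr_ge0.
  rewrite enorm2 /r /K0 enorm2 -/ci.
  nra.
rewrite int_lin //= lee_fin.
have hq : (ci - 1) * eta k <= (c k.-1)^-1 * eta k.-1.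
  case: k hk @z @x @xp Hx Cz Cx Cxp Fx Fxp ck0 ck1 ek Astep @ci cci @K0 @r => [//|[|k']] _ /=.
  - move=> *; apply: le_trans hone _.
    have /andP[c00 _] := hc 0%N; have e0 := heta 0%N.
    by apply: mulr_ge0; [apply/ltW; rewrite invr_gt0 | exact: ltW].
  - by move=> *; apply: hstep.
have hprod : 0 <= ((c k.-1)^-1 * eta k.-1 - (ci - 1) * eta k) * (F xp - F xstar).
  by apply: mulr_ge0; lra.
rewrite /K0 -/ci.
rewrite -/(F x) -/(F xstar) -/(F xp).
nra.
Qed.
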